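(* Let $r(t)\in\mathbb{R}^k$ be an RC process, let $t\in\mathbb{Z}$, $\sigma\in\Sigma$, and let $z$ be a real random variable that is a finite linear combination of the coordinates of the random vectors $z^r_v(t)$, $v\in L$. Then $E[z^2u_\sigma(t)^2]\le p_\sigma E[z^2]$.
   Context: Setting (RC framework). All random variables are on one probability space. $\Sigma$ is a finite alphabet, $\Sigma^*$ the finite words (empty word $\epsilon$), $\Sigma^+=\Sigma^*\setminus\{\epsilon\}$, $|w|$ the length. Fix reals $p_\sigma>0$ ($\sigma\in\Sigma$); $p_\epsilon=1$, $p_{\sigma_1\cdots\sigma_k}=p_{\sigma_1}\cdots p_{\sigma_k}$. Input processes are scalar processes $\{u_\sigma(t)\}_{t\in\mathbb{Z}}$, $\sigma\in\Sigma$, such that $\sum_\sigma\alpha_\sigma u_\sigma(t)=1$ for some real constants $\alpha_\sigma$, and all first and second moments of $u_w(t)$ are finite, where for $w=\sigma_1\cdots\sigma_k\in\Sigma^+$, $u_w(t)=u_{\sigma_1}(t-k+1)u_{\sigma_2}(t-k+2)\cdots u_{\sigma_k}(t)$. For a process $r(t)\in\mathbb{R}^k$ and $w\in\Sigma^+$ set $z^r_w(t)=r(t-|w|)u_w(t-1)/\sqrt{p_w}$. A fixed set $L\subseteq\Sigma^+$ of admissible words satisfies: $\Sigma\subseteq L$; $u_w(t)=0$ a.s. for $w\notin L$; and there is $S\subseteq\Sigma\times\Sigma$ such that a word $\sigma_1\cdots\sigma_k$ with $k>1$ is in $L$ iff $(\sigma_i,\sigma_{i+1})\in S$ for all $i$.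 A process $r(t)\in\mathbb{R}^k$ is RC (recursive covariance) if: (1) $E[r(t)]=0$, $E[z^r_w(t)]=0$, and $E[r(t)z^r_w(t)^T]$, $E[z^r_w(t)z^r_v(t)^T]$ are finite and independent of $t$ for all $w,v\in\Sigma^+$; write $T^r_{w,v}=E[z^r_w(t)z^r_v(t)^T]$, $\Lambda^r_w=E[r(t)z^r_w(t)^T]$; (2) for $w,v\in\Sigma^+$, $\sigma,\sigma'\in\Sigma$: $T^r_{\sigma,\sigma'}=0$ if $\sigma\neq\sigma'$; $T^r_{w\sigma,v\sigma'}=0$ if $\sigma\ne\sigma'$ and $T^r_{w\sigma,v\sigma}=T^r_{w,v}$ if $w\sigma\in L$ or $v\sigma\in L$; $T^r_{w\sigma,\sigma'}=0$ if $\sigma\neq\sigma'$ and $T^r_{w\sigma,\sigma}=(\Lambda^r_w)^T$; (3) $T^r_{w,v}=0$ if $w\notin L$ or $v\notin L$, and for $\sigma\in\Sigma$, if $w\sigma\in L$ and $v\sigma\notin L$ then $T^r_{v,w}=0$ and $T^r_{w,v}=0$. *)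

(* Defs.v *)
From Stdlib Require Import Reals Lra Lia ZArith List.
Import ListNotations.
Open Scope R_scope.

(** * Abstract expectation on a probability space.
    [integrable] is the class of integrable (real) random variables on the
    sample space [Omega], and [E] is the expectation, meaningful on that class. *)
Record is_expectation {Omega : Type}
    (integrable : (Omega -> R) -> Prop) (E : (Omega -> R) -> R) : Prop := {
  int_const : forall c : R, integrable (fun _ => c);
  int_add : forall f g, integrable f -> integrable g ->
            integrable (fun w => f w + g w);
  int_scal : forall (a : R) f, integrable f -> integrable (fun w => a * f w);
  E_const : forall c : R, E (fun _ => c) = c;
  E_add : forall f g, integrable f -> integrable g ->
          E (fun w => f w + g w) = E f + E g;
  E_scal : forall (a : R) f, integrable f -> E (fun w => a * f w) = a * E f;
  E_mono : forall f g, integrable f -> integrable g ->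
           (forall w, f w <= g w) -> E f <= E g
}.

(** [f = 0] almost surely (f square-integrable with E[f^2] = 0). *)
Definition as_zero {Omega : Type} (integrable : (Omega -> R) -> Prop)
  (E : (Omega -> R) -> R) (f : Omega -> R) : Prop :=
  integrable (fun w => f w ^ 2) /\ E (fun w => f w ^ 2) = 0.

Definition sumL {A : Type} (l : list A) (f : A -> R) : R :=
  fold_right (fun a acc => f a + acc) 0 l.

Definition pw {Sigma : Type} (p : Sigma -> R) (w : list Sigma) : R :=
  fold_right (fun s acc => p s * acc) 1 w.

(** u_w(t) = u_{s1}(t-k+1) u_{s2}(t-k+2) ... u_{sk}(t) for w = s1...sk *)
Fixpoint u_word {Omega Sigma : Type} (u : Sigma -> Z -> Omega -> R)
  (w : list Sigma) (t : Z) : Omega -> R :=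
  match w with
  | [] => fun _ => 1
  | s :: w' => fun om => u s (t - Z.of_nat (length w'))%Z om * u_word u w' t om
  end.

Fixpoint pairs_ok {Sigma : Type} (S : Sigma -> Sigma -> Prop) (w : list Sigma)
  : Prop :=
  match w with
  | [] => True
  | a :: w' => match w' with
               | [] => True
               | b :: _ => S a b /\ pairs_ok S w'
               end
  end.

Definition inL {Sigma : Type} (S : Sigma -> Sigma -> Prop) (w : list Sigma)
  : Prop := w <> [] /\ pairs_ok S w.

Definition input_process {Omega Sigma : Type}
  (integrable : (Omega -> R) -> Prop) (E : (Omega -> R) -> R)
  (Senum : list Sigma) (u : Sigma -> Z -> Omega -> R) : Prop :=
  (exists alpha : Sigma -> R, forall t : Z,
      as_zero integrable E
        (fun om => sumL Senum (fun s => alpha s * u s t om) - 1)) /\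
  (forall (w : list Sigma) (t : Z), w <> [] ->
      integrable (u_word u w t) /\ integrable (fun om => u_word u w t om ^ 2)).

(** z^r_w(t) = r(t-|w|) u_w(t-1) / sqrt(p_w), coordinate i;
    the R^k-valued process r is given by its coordinates r t i, i < k. *)
Definition zr {Omega Sigma : Type} (r : Z -> nat -> Omega -> R)
  (u : Sigma -> Z -> Omega -> R) (p : Sigma -> R)
  (w : list Sigma) (t : Z) (i : nat) : Omega -> R :=
  fun om => r (t - Z.of_nat (length w))%Z i om * u_word u w (t - 1)%Z om
            / sqrt (pw p w).

(** T^r_{w,v} (entry i,j), evaluated at t = 0 (time-independent under RC) *)
Definition Tcov {Omega Sigma : Type} (E : (Omega -> R) -> R)
  (r : Z -> nat -> Omega -> R) (u : Sigma -> Z -> Omega -> R) (p : Sigma -> R)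
  (w v : list Sigma) (i j : nat) : R :=
  E (fun om => zr r u p w 0 i om * zr r u p v 0 j om).

Definition Lam {Omega Sigma : Type} (E : (Omega -> R) -> R)
  (r : Z -> nat -> Omega -> R) (u : Sigma -> Z -> Omega -> R) (p : Sigma -> R)
  (w : list Sigma) (i j : nat) : R :=
  E (fun om => r 0%Z i om * zr r u p w 0 j om).

Definition RC {Omega Sigma : Type}
  (integrable : (Omega -> R) -> Prop) (E : (Omega -> R) -> R)
  (S : Sigma -> Sigma -> Prop) (u : Sigma -> Z -> Omega -> R) (p : Sigma -> R)
  (k : nat) (r : Z -> nat -> Omega -> R) : Prop :=
  (forall t i, (i < k)%nat -> integrable (r t i) /\ E (r t i) = 0) /\
  (forall w t i, w <> [] -> (i < k)%nat ->
     integrable (zr r u p w t i) /\ E (zr r u p w t i) = 0) /\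
  (forall w t t' i j, w <> [] -> (i < k)%nat -> (j < k)%nat ->
     integrable (fun om => r t i om * zr r u p w t j om) /\
     E (fun om => r t i om * zr r u p w t j om) =
     E (fun om => r t' i om * zr r u p w t' j om)) /\
  (forall w v t t' i j, w <> [] -> v <> [] -> (i < k)%nat -> (j < k)%nat ->
     integrable (fun om => zr r u p w t i om * zr r u p v t j om) /\
     E (fun om => zr r u p w t i om * zr r u p v t j om) =
     E (fun om => zr r u p w t' i om * zr r u p v t' j om)) /\
  (forall s s' i j, s <> s' -> (i < k)%nat -> (j < k)%nat ->
     Tcov E r u p [s] [s'] i j = 0) /\
  (forall w v s s' i j, w <> [] -> v <> [] -> s <> s' ->
     (i < k)%nat -> (j < k)%nat ->
     Tcov E r u p (w ++ [s]) (v ++ [s']) i j = 0) /\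
  (forall w v s i j, w <> [] -> v <> [] ->
     (inL S (w ++ [s]) \/ inL S (v ++ [s])) ->
     (i < k)%nat -> (j < k)%nat ->
     Tcov E r u p (w ++ [s]) (v ++ [s]) i j = Tcov E r u p w v i j) /\
  (forall w s s' i j, w <> [] -> s <> s' -> (i < k)%nat -> (j < k)%nat ->
     Tcov E r u p (w ++ [s]) [s'] i j = 0) /\
  (forall w s i j, w <> [] -> (i < k)%nat -> (j < k)%nat ->
     Tcov E r u p (w ++ [s]) [s] i j = Lam E r u p w j i) /\
  (forall w v i j, w <> [] -> v <> [] -> (~ inL S w \/ ~ inL S v) ->
     (i < k)%nat -> (j < k)%nat -> Tcov E r u p w v i j = 0) /\
  (forall w v s i j, w <> [] -> v <> [] ->
     inL S (w ++ [s]) -> ~ inL S (v ++ [s]) ->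
     (i < k)%nat -> (j < k)%nat ->
     Tcov E r u p v w i j = 0 /\ Tcov E r u p w v i j = 0).

(* Main.v *)
Require Import Defs.
From Stdlib Require Import Reals ZArith List Lra Lia FunctionalExtensionality.
Import ListNotations.
Open Scope R_scope.
From Stdlib Require Import ClassicalEpsilon.

Lemma fe_rw {Omega : Type} (E : (Omega -> R) -> R) (integrable : (Omega -> R) -> Prop)
  (f g : Omega -> R) : (forall om, f om = g om) -> E f = E g /\ (integrable f <-> integrable g).
Proof. intros H. assert (f = g) by (apply functional_extensionality; auto). subst; tauto. Qed.

Lemma inner {Omega A : Type} integrable (E : (Omega -> R) -> R) (HE : is_expectation integrable E)
  (g : Omega -> R) (co : A -> R) (f : A -> Omega -> R) (M : A -> R) (b : list A) :
  (forall y, In y b -> integrable (fun om => g om * f y om) /\ E (fun om => g om * f y om) = M y) ->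
  integrable (fun om => g om * sumL b (fun y => co y * f y om)) /\
  E (fun om => g om * sumL b (fun y => co y * f y om)) = sumL b (fun y => co y * M y).
Proof.
  induction b as [|y b IH]; intros H; simpl.
  - destruct (fe_rw E integrable (fun om => g om * 0) (fun _ => 0)) as [e1 e2]; [intros; ring|].
    rewrite e1, e2; split; [apply (int_const _ _ HE)| apply (E_const _ _ HE)].
  - destruct (H y (or_introl eq_refl)) as [Hi He].
    destruct IH as [Hi' He']; [intros; apply H; simpl; auto|].
    destruct (fe_rw E integrable (fun om => g om * (co y * f y om + sumL b (fun y0 => co y0 * f y0 om)))
      (fun om => (fun om => co y * (g om * f y om)) om + (fun om => g om * sumL b (fun y0 => co y0 * f y0 om)) om)) as [e1 e2]; [intros; ring|].
    rewrite e1, e2. split.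
    + apply (int_add _ _ HE); auto. apply (int_scal _ _ HE); auto.
    + rewrite (E_add _ _ HE); [| apply (int_scal _ _ HE); auto | auto].
      rewrite (E_scal _ _ HE) by auto. rewrite He, He'. ring.
Qed.

Lemma bil {Omega A : Type} integrable (E : (Omega -> R) -> R) (HE : is_expectation integrable E)
  (co : A -> R) (f : A -> Omega -> R) (M : A -> A -> R) (a b : list A) :
  (forall x y, In x a -> In y b -> integrable (fun om => f x om * f y om) /\ E (fun om => f x om * f y om) = M x y) ->
  integrable (fun om => sumL a (fun x => co x * f x om) * sumL b (fun y => co y * f y om)) /\
  E (fun om => sumL a (fun x => co x * f x om) * sumL b (fun y => co y * f y om)) =
  sumL a (fun x => sumL b (fun y => co x * co y * M x y)).
Proof.
  induction a as [|x a IH]; intros H; simpl.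
  - destruct (fe_rw E integrable (fun om => 0 * sumL b (fun y => co y * f y om)) (fun _ => 0)) as [e1 e2]; [intros; ring|].
    rewrite e1, e2; split; [apply (int_const _ _ HE)| apply (E_const _ _ HE)].
  - destruct (inner integrable E HE (f x) co f (M x) b) as [Hi He]; [intros; apply H; simpl; auto|].
    destruct IH as [Hi' He']; [intros; apply H; simpl; auto|].
    destruct (fe_rw E integrable (fun om => (co x * f x om + sumL a (fun x0 => co x0 * f x0 om)) * sumL b (fun y => co y * f y om))
      (fun om => (fun om => co x * (f x om * sumL b (fun y => co y * f y om))) om + (fun om => sumL a (fun x0 => co x0 * f x0 om) * sumL b (fun y => co y * f y om)) om)) as [e1 e2]; [intros; ring|].
    rewrite e1, e2. split.
    + apply (int_add _ _ HE); auto. apply (int_scal _ _ HE); auto.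
    + rewrite (E_add _ _ HE); [| apply (int_scal _ _ HE); auto | auto].
      rewrite (E_scal _ _ HE) by auto. rewrite He, He'. f_equal.
      clear. induction b; simpl; [ring|]. rewrite <- IHb. ring.
Qed.

Lemma u_word_app {Omega Sigma : Type} (u : Sigma -> Z -> Omega -> R) (v : list Sigma) (s : Sigma) t om :
  u_word u (v ++ [s]) t om = u_word u v (t - 1)%Z om * u s t om.
Proof.
  induction v as [|a v IH]; simpl.
  - replace (t - 0)%Z with t by lia. ring.
  - rewrite IH, length_app. simpl.
    replace (t - Z.of_nat (length v + 1))%Z with (t - 1 - Z.of_nat (length v))%Z by lia. ring.
Qed.

Lemma pw_app {Sigma : Type} (p : Sigma -> R) v s : pw p (v ++ [s]) = pw p v * p s.
Proof. induction v; simpl; [unfold pw; simpl; ring|]. unfold pw in *; simpl. rewrite IHv. ring. Qed.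

Lemma pw_pos {Sigma : Type} (p : Sigma -> R) (Hp : forall s, 0 < p s) v : 0 < pw p v.
Proof. induction v; unfold pw in *; simpl; [lra|]. apply Rmult_lt_0_compat; auto. Qed.

Lemma sumL_minus {A} (l : list A) f g : sumL l (fun x => f x - g x) = sumL l f - sumL l g.
Proof. induction l; simpl; [ring|]. rewrite IHl; ring. Qed.

Lemma sumL_ext {A} (l : list A) f g : (forall x, In x l -> f x = g x) -> sumL l f = sumL l g.
Proof. induction l; simpl; intros H; [auto|]. rewrite H, IHl; auto. Qed.

Theorem mainTheorem2
  (Omega : Type) (integrable : (Omega -> R) -> Prop) (E : (Omega -> R) -> R)
  (HE : is_expectation integrable E)
  (Sigma : Type) (Senum : list Sigma)
  (HSenum : forall s : Sigma, In s Senum) (HSnodup : NoDup Senum)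
  (p : Sigma -> R) (Hp : forall s, 0 < p s)
  (u : Sigma -> Z -> Omega -> R)
  (Hu : input_process integrable E Senum u)
  (S : Sigma -> Sigma -> Prop)
  (HL : forall (w : list Sigma) (t : Z), w <> [] -> ~ inL S w ->
          as_zero integrable E (u_word u w t))
  (k : nat) (r : Z -> nat -> Omega -> R)
  (Hr : RC integrable E S u p k r)
  (t : Z) (s : Sigma) (cs : list (list Sigma * nat * R))
  (Hcs : forall c, In c cs -> inL S (fst (fst c)) /\ (snd (fst c) < k)%nat) :
  let z := fun om => sumL cs (fun c => snd c * zr r u p (fst (fst c)) t (snd (fst c)) om) in
  integrable (fun om => z om ^ 2 * u s t om ^ 2) /\
  E (fun om => z om ^ 2 * u s t om ^ 2) <= p s * E (fun om => z om ^ 2).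
Proof.
  intros z.
  destruct Hr as (H1 & H2 & H3 & H4 & H5 & H6 & H7 & H8 & H9 & H10 & H11).
  assert (good : forall c, In c cs -> fst (fst c) <> [] /\ (snd (fst c) < k)%nat).
  { intros c Hc. destruct (Hcs c Hc) as [[Hn _] Hk]. auto. }
  set (f := fun (tt : Z) (c : list Sigma * nat * R) => zr r u p (fst (fst c)) tt (snd (fst c))).
  set (f' := fun (c : list Sigma * nat * R) => zr r u p (fst (fst c) ++ [s]) (t + 1) (snd (fst c))).
  set (M := fun x y : list Sigma * nat * R => Tcov E r u p (fst (fst x)) (fst (fst y)) (snd (fst x)) (snd (fst y))).
  set (M' := fun x y : list Sigma * nat * R => Tcov E r u p (fst (fst x) ++ [s]) (fst (fst y) ++ [s]) (snd (fst x)) (snd (fst y))).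
  set (cB := fun c : list Sigma * nat * R => if excluded_middle_informative (inL S (fst (fst c) ++ [s])) then 0 else snd c).
  assert (HM : forall x y, In x cs -> In y cs -> integrable (fun om => f t x om * f t y om) /\ E (fun om => f t x om * f t y om) = M x y).
  { intros x y Hx Hy. destruct (good x Hx), (good y Hy).
    destruct (H4 (fst (fst x)) (fst (fst y)) t 0%Z (snd (fst x)) (snd (fst y))) as [Ha Hb]; auto. }
  assert (HM' : forall x y, In x cs -> In y cs -> integrable (fun om => f' x om * f' y om) /\ E (fun om => f' x om * f' y om) = M' x y).
  { intros x y Hx Hy. destruct (good x Hx), (good y Hy).
    destruct (H4 (fst (fst x) ++ [s]) (fst (fst y) ++ [s]) (t+1)%Z 0%Z (snd (fst x)) (snd (fst y))) as [Ha Hb]; auto;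
    try (intro Hc; apply app_eq_nil in Hc; destruct Hc; discriminate). }
  destruct (bil integrable E HE snd (f t) M cs cs HM) as [Iz Ez].
  destruct (bil integrable E HE snd f' M' cs cs HM') as [Iz' Ez'].
  destruct (bil integrable E HE cB (f t) M cs cs HM) as [IzB EzB].
  assert (sqp : sqrt (p s) * sqrt (p s) = p s) by (apply sqrt_sqrt; left; auto).
  assert (pt : forall om, z om * u s t om = sqrt (p s) * sumL cs (fun c => snd c * f' c om)).
  { intros om. unfold z. clear -Hp. induction cs as [|c l IH]; simpl; [ring|].
    assert (e : zr r u p (fst (fst c)) t (snd (fst c)) om * u s t om = sqrt (p s) * f' c om).
    { unfold f', zr. rewrite u_word_app, pw_app, sqrt_mult, length_app by (left; try apply pw_pos; auto).
      simpl length. replace (t + 1 - 1)%Z with t by lia.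
      replace (t + 1 - Z.of_nat (length (fst (fst c)) + 1))%Z with (t - Z.of_nat (length (fst (fst c))))%Z by lia.
      assert (0 < sqrt (pw p (fst (fst c)))) by (apply sqrt_lt_R0; apply pw_pos; auto).
      assert (0 < sqrt (p s)) by (apply sqrt_lt_R0; auto).
      field; lra. }
    rewrite Rmult_plus_distr_r, IH, Rmult_assoc, e. ring. }
  destruct (fe_rw E integrable (fun om => z om ^ 2 * u s t om ^ 2)
     (fun om => p s * (sumL cs (fun c => snd c * f' c om) * sumL cs (fun c => snd c * f' c om)))) as [e1 e2].
  { intros om. rewrite <- sqp. replace (z om ^ 2 * u s t om ^ 2) with ((z om * u s t om) * (z om * u s t om)) by ring.
    rewrite pt. ring. }
  destruct (fe_rw E integrable (fun om => z om ^ 2)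
     (fun om => sumL cs (fun c => snd c * f t c om) * sumL cs (fun c => snd c * f t c om))) as [e3 e4].
  { intros om. unfold z, f. ring. }
  rewrite e1, e2, e3. split; [apply (int_scal _ _ HE); auto|].
  rewrite (E_scal _ _ HE) by auto. rewrite Ez, Ez'.
  apply Rmult_le_compat_l; [left; auto|].
  assert (nn : 0 <= E (fun om => sumL cs (fun x => cB x * f t x om) * sumL cs (fun y => cB y * f t y om))).
  { rewrite <- (E_const _ _ HE 0). apply (E_mono _ _ HE); auto; [apply (int_const _ _ HE)|].
    intros; apply Rle_0_sqr. }
  rewrite EzB in nn.
  assert (eq : sumL cs (fun x => sumL cs (fun y => snd x * snd y * M x y)) -
               sumL cs (fun x => sumL cs (fun y => snd x * snd y * M' x y)) =
               sumL cs (fun x => sumL cs (fun y => cB x * cB y * M x y))).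
  { rewrite <- sumL_minus. apply sumL_ext. intros x Hx. rewrite <- sumL_minus. apply sumL_ext. intros y Hy.
    destruct (good x Hx) as [nx kx], (good y Hy) as [ny ky].
    unfold cB, M, M'.
    destruct (excluded_middle_informative (inL S (fst (fst x) ++ [s]))) as [ix|ix];
    destruct (excluded_middle_informative (inL S (fst (fst y) ++ [s]))) as [iy|iy].
    - rewrite H7; auto. ring.
    - rewrite H7; auto. ring.
    - rewrite H7; auto. ring.
    - rewrite (H10 (fst (fst x) ++ [s]) (fst (fst y) ++ [s])); auto; try (intro Hc; apply app_eq_nil in Hc; destruct Hc; discriminate). ring. }
  lra.
Qed.
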